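(* A $\mathsf{BST}$-conjunction $\Phi$ is satisfiable if and only if there is a map $\mathfrak F:V\to\mathcal P(\mathcal P^+(V))$, where $V=\mathrm{Vars}(\Phi)$ and $\mathcal P^+(V)=\mathcal P(V)\setminus\{\emptyset\}$, such that (a) $\mathfrak F(x)=\mathfrak F(y)\star\mathfrak F(z)$ for every conjunct $x=y\star z$ of $\Phi$ with $\star\in\{\cup,\setminus\}$, and (b) $\mathfrak F(x)\neq\mathfrak F(y)$ for every conjunct $x\neq y$ of $\Phi$.
   Context: Sets range over the von Neumann universe of well-founded sets. A $\mathsf{BST}$-conjunction is a finite conjunction of literals of the forms $x=y\cup z$, $x=y\setminus z$, $x\neq y$ with $x,y,z$ set variables; it is satisfiable if some set assignment $M$ on its variables makes all literals true when each variable $v$ is interpreted as $Mv$. $\mathcal P(\cdot)$ denotes the power set. *)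

(* Defs.v *)
(* sets are modelled by
   Aczel's well-founded sets-as-trees with extensional equality. *)
From Stdlib Require List.
From mathcomp Require Import all_boot.
Set Implicit Arguments. Unset Strict Implicit. Unset Printing Implicit Defensive.

Inductive Ens : Type := sup : forall A : Type, (A -> Ens) -> Ens.

Fixpoint EQ (x y : Ens) {struct x} : Prop :=
  match x, y with
  | sup A f, sup B g =>
      (forall a : A, exists b : B, EQ (f a) (g b)) /\
      (forall b : B, exists a : A, EQ (f a) (g b))
  end.

Definition IN (w y : Ens) : Prop :=
  match y with sup B g => exists b : B, EQ w (g b) end.

Inductive lit (T : Type) : Type :=
  | LUnion of T & T & T   (* x = y \cup z *)
  | LDiff  of T & T & T   (* x = y \setminus z *)
  | LNeq   of T & T.

Definition conj (T : Type) := seq (lit T).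

Definition lit_vars (T : Type) (l : lit T) : seq T :=
  match l with
  | LUnion x y z => [:: x; y; z]
  | LDiff x y z => [:: x; y; z]
  | LNeq x y => [:: x; y]
  end.

Definition Vars (T : finType) (Phi : conj T) : {set T} :=
  [set v | v \in flatten (map (@lit_vars T) Phi)].

Definition holds (T : Type) (M : T -> Ens) (l : lit T) : Prop :=
  match l with
  | LUnion x y z => forall w, IN w (M x) <-> (IN w (M y) \/ IN w (M z))
  | LDiff x y z => forall w, IN w (M x) <-> (IN w (M y) /\ ~ IN w (M z))
  | LNeq x y => ~ EQ (M x) (M y)
  end.

Definition satisfiable (T : Type) (Phi : conj T) : Prop :=
  exists M : T -> Ens, forall l, List.In l Phi -> holds M l.

(* F : V -> P(P^+(V)), given as a map on T whose values at variables of Phi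
   are families of nonempty subsets of V; values outside V are irrelevant. *)
Definition good_map (T : finType) (Phi : conj T) (F : T -> {set {set T}}) : Prop :=
  (forall x, x \in Vars Phi -> forall S, S \in F x -> S \subset Vars Phi /\ S != set0) /\
  (forall l, List.In l Phi ->
     match l with
     | LUnion x y z => F x = F y :|: F z
     | LDiff x y z => F x = F y :\: F z
     | LNeq x y => F x <> F y
     end).

(* Main.v *)
Require Import Defs.
From mathcomp Require Import all_boot.
From Stdlib Require Import Classical ClassicalEpsilon.
Set Implicit Arguments. Unset Strict Implicit.

Definition pb (P : Prop) : bool := if excluded_middle_informative P then true else false.
Lemma pbP (P : Prop) : reflect P (pb P).
Proof. rewrite /pb; case: excluded_middle_informative => h; constructor => //. Qed.

Lemma EQ_refl x : EQ x x.
Proof. elim: x => A f IH /=; split=> a; exists a; apply: IH. Qed.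

Lemma EQ_sym x y : EQ x y -> EQ y x.
Proof.
elim: x y => A f IH [B g] /= [H1 H2]; split.
- move=> b; case: (H2 b) => a h; exists a; exact: IH.
- move=> a; case: (H1 a) => b h; exists b; exact: IH.
Qed.

Lemma EQ_ext X Y : ~ EQ X Y ->
  exists w, (IN w X /\ ~ IN w Y) \/ (IN w Y /\ ~ IN w X).
Proof.
case: X => A f; case: Y => B g /= H.
case: (classic (forall a, exists b, EQ (f a) (g b))) => H1.
- have H2 : ~ (forall b, exists a, EQ (f a) (g b)) by move=> H2; apply: H; split.
  case: (not_all_ex_not _ _ H2) => b Hb; exists (g b); right; split.
  + exists b; exact: EQ_refl.
  + move=> [a h]; apply: Hb; exists a; exact: EQ_sym.
- case: (not_all_ex_not _ _ H1) => a Ha; exists (f a); left; split => //.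
  exists a; exact: EQ_refl.
Qed.

Fixpoint atom (n : nat) : Ens :=
  match n with
  | 0 => sup (fun e : Empty_set => match e with end)
  | k.+1 => sup (fun _ : unit => atom k)
  end.

Lemma atom_EQ2 n m w : EQ w (atom n) -> EQ w (atom m) -> n = m.
Proof.
elim: n m w => [|n IH] [|m] [A f] //=.
- move=> [H1 _] [_ H2]; case: (H2 tt) => a _; by case: (H1 a).
- move=> [_ H2] [H1 _]; case: (H2 tt) => a _; by case: (H1 a).
- move=> [_ H1] [H2 _]; case: (H1 tt) => a ha; case: (H2 a) => _ hb.
  by rewrite (IH m (f a)).
Qed.

Lemma lit_in_Vars (T : finType) (Phi : conj T) l v :
  List.In l Phi -> v \in lit_vars l -> v \in Vars Phi.
Proof.
rewrite /Vars inE; elim: Phi => [|a P IH] //= [->|h] hv; rewrite mem_cat.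
- by rewrite hv.
- by rewrite IH ?orbT.
Qed.

Section Back.
Variable T : finType.
Variable F : T -> {set {set T}}.
Definition Mof (x : T) : Ens :=
  sup (fun s : {S : {set T} | S \in F x} => atom (pickle (val s))).
Lemma IN_M w x : IN w (Mof x) <-> exists S, S \in F x /\ EQ w (atom (pickle S)).
Proof.
split; [move=> [[S HS] H]; by exists S | move=> [S [HS H]]; by exists (exist _ S HS)].
Qed.
End Back.

Theorem mainTheorem16 (T : finType) (Phi : conj T) :
  satisfiable Phi <-> exists F : T -> {set {set T}}, good_map Phi F.
Proof.
split.
- move=> [M HM].
  pose sig w := [set v | (v \in Vars Phi) && pb (IN w (M v))].
  have sigE w v : v \in sig w = (v \in Vars Phi) && pb (IN w (M v)) by rewrite inE.
  pose F x := [set S | pb (exists w, IN w (M x) /\ S = sig w)].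
  have FE x S : S \in F x <-> exists w, IN w (M x) /\ S = sig w.
    by rewrite inE; split => /pbP.
  exists F; split.
  + move=> x Hx S /FE [w [Hw ->]]; split.
      by apply/subsetP => v; rewrite sigE => /andP [].
    apply/set0Pn; exists x; rewrite sigE Hx; exact/pbP.
  + move=> l Hl; have Hv := lit_in_Vars Hl; have := HM l Hl.
    case: l Hl Hv => [x y z|x y z|x y] Hl Hv /= H.
    * apply/setP => S; rewrite in_setU; apply/idP/orP.
        move/FE => [w [Hw ->]]; case: ((H w).1 Hw) => h; [left|right]; apply/FE; by exists w.
      case=> /FE [w [Hw ->]]; apply/FE; exists w; split => //; apply/(H w); tauto.
    * have zV : z \in Vars Phi by apply: Hv; rewrite !inE eqxx !orbT.
      apply/setP => S; rewrite in_setD; apply/idP/andP.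
        move/FE => [w [Hw ->]]; case: ((H w).1 Hw) => hy hz; split; last first.
          by apply/FE; exists w.
        apply/negP => /FE [w' [Hw' E]]; apply: hz.
        have : z \in sig w' by rewrite sigE zV; apply/pbP.
        by rewrite -E sigE => /andP [_ /pbP].
      case=> /negP hn /FE [w [Hw E]]; subst S; apply/FE; exists w; split => //.
      apply/(H w); split => // hz; apply: hn; apply/FE; by exists w.
    * have xV : x \in Vars Phi by apply: Hv; rewrite !inE eqxx.
      have yV : y \in Vars Phi by apply: Hv; rewrite !inE eqxx !orbT.
      move=> E; case: (EQ_ext H) => w [[h1 h2]|[h1 h2]].
        have : sig w \in F y by rewrite -E; apply/FE; exists w.
        move/FE => [w' [Hw' E']]; apply: h2.
        have : y \in sig w' by rewrite sigE yV; apply/pbP.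
        by rewrite -E' sigE => /andP [_ /pbP].
      have : sig w \in F x by rewrite E; apply/FE; exists w.
      move/FE => [w' [Hw' E']]; apply: h2.
      have : x \in sig w' by rewrite sigE xV; apply/pbP.
      by rewrite -E' sigE => /andP [_ /pbP].
- move=> [F [_ HF]]; exists (Mof F) => l Hl; have := HF l Hl.
  case: l Hl => [x y z|x y z|x y] Hl H; rewrite /holds.
  + move=> w; rewrite !IN_M H; split.
      move=> [S [HS h]]; move: HS; rewrite inE => /orP [] HS; [left|right]; by exists S.
    case=> [[S [HS h]]|[S [HS h]]]; exists S; by rewrite inE HS ?orbT.
  + move=> w; rewrite !IN_M H; split.
      move=> [S [HS h]]; move: HS; rewrite inE => /andP [HSz HSy]; split.
        by exists S.
      move=> [S' [HS' h']]; move/(pcan_inj (@pickleK_inv _)): (atom_EQ2 h h') => E.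
      by move: HSz; rewrite E HS'.
    move=> [[S [HS h]] hn]; exists S; rewrite inE HS andbT; split => //.
    by apply/negP => HSz; apply: hn; exists S.
  + move=> E; apply: H; rewrite /Mof /= in E; case: E => [E1 E2].
    apply/setP => S; apply/idP/idP => HS.
      case: (E1 (exist _ S HS)) => [[S' HS']] /= h.
      move/(pcan_inj (@pickleK_inv _)): (atom_EQ2 (EQ_refl _) h) => ->; exact: HS'.
    case: (E2 (exist _ S HS)) => [[S' HS']] /= h.
    move/(pcan_inj (@pickleK_inv _)): (atom_EQ2 h (EQ_refl _)) => ->; exact: HS'.
Qed.
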